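(* Let $\alpha>1$, $V(x)=|x|^\alpha/\alpha$, and let $\mu$ be the probability measure $d\mu(x)=Z^{-1}e^{-V(x)}dx$ on $\mathbb{R}$ ($Z$ a normalizing constant). Let $\nu$ be the symmetric exponential measure $d\nu(x)=\frac12e^{-|x|}dx$ and let $t:\mathbb{R}\to\mathbb{R}$ be the monotone rearrangement map pushing $\nu$ to $\mu$ (i.e. $G=H\circ t$ with $G,H$ the distribution functions of $\nu,\mu$). Then there is a constant $C_\alpha>0$ depending only on $\alpha$ such that $$|t'\circ t^{-1}(x)|\le\frac{C_\alpha}{V'(|x|)+1},\quad x\in\mathbb{R}.$$ *)

(* Defs.v *)
From Stdlib Require Import Reals.
From Coquelicot Require Import Coquelicot.
Open Scope R_scope.

(* |x|^a with the convention 0^a = 0 (a > 0); Stdlib's Rpower 0 a = 1. *)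
Definition abspow (a x : R) : R :=
  if Req_EM_T x 0 then 0 else Rpower (Rabs x) a.

Definition V (alpha : R) (x : R) : R := abspow alpha x / alpha.

Definition Zc (alpha : R) : R :=
  RInt_gen (fun x => exp (- V alpha x)) (Rbar_locally m_infty) (Rbar_locally p_infty).

Definition H (alpha : R) (x : R) : R :=
  RInt_gen (fun y => exp (- V alpha y) / Zc alpha) (Rbar_locally m_infty) (at_point x).

Definition G (x : R) : R :=
  RInt_gen (fun y => / 2 * exp (- Rabs y)) (Rbar_locally m_infty) (at_point x).

(* Main.v *)
Require Import Defs.
From Stdlib Require Import Reals Lra.
From Coquelicot Require Import Coquelicot.
Open Scope R_scope.


Lemma V_pos (a x : R) : 0 < x -> V a x = Rpower x a / a.
Proof.
  intros Hx; unfold V, abspow.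
  destruct (Req_EM_T x 0) as [e|n]; [lra|].
  rewrite Rabs_pos_eq; lra.
Qed.

Lemma V_even (a x : R) : V a (- x) = V a x.
Proof.
  unfold V, abspow.
  destruct (Req_EM_T (-x) 0); destruct (Req_EM_T x 0); try lra.
  rewrite Rabs_Ropp; reflexivity.
Qed.

Lemma V_0 (a : R) : V a 0 = 0.
Proof. unfold V, abspow; destruct (Req_EM_T 0 0); lra. Qed.

Lemma Rpower_pos' (x y : R) : 0 < Rpower x y.
Proof. unfold Rpower; apply exp_pos. Qed.

Lemma V_nonneg (a x : R) : 0 < a -> 0 <= V a x.
Proof.
  intros Ha; unfold V, abspow.
  destruct (Req_EM_T x 0). lra.
  apply Rmult_le_pos. left; apply Rpower_pos'. left; apply Rinv_0_lt_compat; lra.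
Qed.

Lemma V_le1 (a x : R) : 1 < a -> Rabs x <= 1 -> V a x <= 1.
Proof.
  intros Ha Hx; unfold V, abspow.
  destruct (Req_EM_T x 0). lra.
  assert (Rpower (Rabs x) a <= 1).
  { rewrite <- (Rpower_1_base a) at 1 || idtac.
    replace 1 with (Rpower 1 a) by (unfold Rpower; rewrite ln_1, Rmult_0_r, exp_0; reflexivity).
    apply Rle_Rpower_l. lra. split; [|lra]. apply Rabs_pos_lt; auto. }
  apply (Rmult_le_reg_r a). lra. unfold Rdiv. rewrite Rmult_assoc, Rinv_l by lra. lra.
Qed.

Lemma abspow_le1 (a x : R) : 0 < a -> Rabs x <= 1 -> abspow a x <= 1.
Proof.
  intros Ha Hx; unfold abspow.
  destruct (Req_EM_T x 0). lra.
  replace 1 with (Rpower 1 a) by (unfold Rpower; rewrite ln_1, Rmult_0_r, exp_0; reflexivity).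
  apply Rle_Rpower_l. lra. split; [|lra]. apply Rabs_pos_lt; auto.
Qed.

Lemma V_der_pos (a x : R) : 0 < a -> 0 < x -> is_derive (V a) x (Rpower x (a - 1)).
Proof.
  intros Ha Hx.
  apply is_derive_ext_loc with (f := fun y => / a * Rpower y a).
  { exists (mkposreal x Hx). intros y Hy. unfold ball in Hy; simpl in Hy.
    unfold AbsRing_ball, abs, minus, plus, opp in Hy; simpl in Hy.
    rewrite V_pos. unfold Rdiv; apply Rmult_comm. apply Rabs_def2 in Hy. lra. }
  replace (Rpower x (a - 1)) with (/ a * (a * Rpower x (a - 1))) by (field; lra).
  apply is_derive_scal.
  apply is_derive_Reals. apply derivable_pt_lim_power. exact Hx.
Qed.

Lemma V_der_0 (a : R) : 1 < a -> is_derive (V a) 0 0.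
Proof.
  intros Ha. apply is_derive_Reals. intros eps Heps.
  assert (Hd : 0 < Rpower eps (/ (a - 1))) by apply Rpower_pos'.
  exists (mkposreal _ Hd). intros h Hh0 Hh. simpl in Hh.
  rewrite Rplus_0_l, V_0, Rminus_0_r, Rminus_0_r.
  unfold V, abspow. destruct (Req_EM_T h 0) as [e|_]; [contradiction|].
  assert (Hp : 0 < Rabs h) by (apply Rabs_pos_lt; auto).
  assert (E : Rpower (Rabs h) a = Rpower (Rabs h) (a - 1) * Rabs h).
  { rewrite <- (Rpower_1 (Rabs h)) at 3 by exact Hp. rewrite <- Rpower_plus. f_equal; ring. }
  assert (Hlt : Rpower (Rabs h) (a - 1) < eps).
  { replace eps with (Rpower (Rpower eps (/ (a - 1))) (a - 1)).
    apply Rlt_Rpower_l. lra. lra.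
    rewrite Rpower_mult. rewrite Rinv_l by lra. apply Rpower_1; exact Heps. }
  assert (Hq : Rabs (Rpower (Rabs h) a / a / h) = Rpower (Rabs h) (a - 1) / a).
  { rewrite E. unfold Rdiv. rewrite !Rabs_mult, Rabs_inv, Rabs_inv.
    rewrite (Rabs_pos_eq (Rpower _ _)) by (left; apply Rpower_pos').
    rewrite Rabs_Rabsolu, (Rabs_pos_eq a) by lra. field. lra. }
  rewrite Hq. pose proof (Rpower_pos' (Rabs h) (a - 1)).
  apply Rle_lt_trans with (Rpower (Rabs h) (a - 1)); [|exact Hlt].
  unfold Rdiv. rewrite <- (Rmult_1_r (Rpower (Rabs h) (a-1))) at 2.
  apply Rmult_le_compat_l. lra.
  rewrite <- Rinv_1. apply Rinv_le_contravar; lra.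
Qed.

Lemma V_der_neg (a x : R) : 0 < a -> x < 0 -> is_derive (V a) x (- Rpower (- x) (a - 1)).
Proof.
  intros Ha Hx.
  apply is_derive_ext with (f := fun y => V a (- y)).
  { intros; apply V_even. }
  assert (H1 : is_derive (fun y => V a (- y)) x (scal (-1) (Rpower (- x) (a - 1)))).
  { apply (is_derive_comp (V a) (fun y => - y)).
    apply V_der_pos; lra.
    apply (is_derive_opp (fun y : R => y) x 1). apply is_derive_Reals, derivable_pt_lim_id. }
  replace (- Rpower (- x) (a - 1)) with (scal (-1) (Rpower (- x) (a - 1))).
  exact H1.
  unfold scal; simpl; unfold mult; simpl. ring.
Qed.

Lemma V_ex_derive (a x : R) : 1 < a -> ex_derive (V a) x.
Proof.
  intros Ha. destruct (Rtotal_order x 0) as [H|[H|H]].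
  - eexists; apply V_der_neg; lra.
  - subst; eexists; apply V_der_0; lra.
  - eexists; apply V_der_pos; lra.
Qed.

Lemma V_der_nonneg (a y : R) : 1 < a -> 0 <= y -> is_derive (V a) y (abspow (a - 1) y).
Proof.
  intros Ha Hy. unfold abspow. destruct (Req_EM_T y 0) as [e|n].
  - subst; apply V_der_0; lra.
  - rewrite Rabs_pos_eq by lra. apply V_der_pos; lra.
Qed.

Definition fa (a x : R) : R := exp (- V a x).

Lemma fa_pos a x : 0 < fa a x.
Proof. apply exp_pos. Qed.

Lemma fa_even a x : fa a (- x) = fa a x.
Proof. unfold fa; rewrite V_even; reflexivity. Qed.

Lemma fa_cont a x : 1 < a -> continuous (fa a) x.
Proof.
  intros Ha. apply (ex_derive_continuous (K:=R_AbsRing) (V:=R_NormedModule)). unfold fa.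
  apply (ex_derive_comp exp (fun y => - V a y)).
  eexists; apply is_derive_exp.
  apply (ex_derive_opp (V a)). apply V_ex_derive; exact Ha.
Qed.

Lemma fa_ge a x : 1 < a -> Rabs x <= 1 -> exp (-1) <= fa a x.
Proof.
  intros Ha Hx. unfold fa. destruct (Rle_lt_or_eq_dec _ _ (V_le1 a x Ha Hx)) as [h|h].
  left; apply exp_increasing; lra. replace (-1) with (- V a x) by lra; right; reflexivity.
Qed.

Lemma fa_der_pos a x : 1 < a -> 0 < x -> is_derive (fa a) x (- Rpower x (a - 1) * fa a x).
Proof.
  intros Ha Hx. unfold fa.
  assert (H1 : is_derive (fun y => exp (- V a y)) x (scal (- Rpower x (a - 1)) (exp (- V a x)))).
  { apply (is_derive_comp exp (fun y => - V a y)). apply is_derive_exp.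
    apply (is_derive_opp (V a)). apply V_der_pos; lra. }
  exact H1.
Qed.

Definition F (a x : R) : R := RInt (fa a) 0 x.

Lemma fa_ex_RInt a u v : 1 < a -> ex_RInt (fa a) u v.
Proof. intros Ha. apply (ex_RInt_continuous (V:=R_CompleteNormedModule)). intros; apply fa_cont; exact Ha. Qed.

Lemma F_is a x : 1 < a -> is_RInt (fa a) 0 x (F a x).
Proof. intros Ha. apply (RInt_correct (V:=R_CompleteNormedModule)), fa_ex_RInt, Ha. Qed.

Lemma F_der a x : 1 < a -> is_derive (F a) x (fa a x).
Proof.
  intros Ha. apply (is_derive_RInt (fa a) (F a) 0 x).
  exists (mkposreal 1 Rlt_0_1). intros; apply F_is; exact Ha.
  apply fa_cont; exact Ha.
Qed.

Lemma F_incr a x y : 1 < a -> x < y -> F a x < F a y.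
Proof.
  intros Ha Hxy. apply (incr_function (F a) m_infty p_infty (fa a)); simpl; auto.
  intros; apply F_der; exact Ha.
  intros; apply fa_pos.
Qed.

Lemma F_0 a : F a 0 = 0.
Proof. unfold F. apply (RInt_point (V:=R_CompleteNormedModule)). Qed.

Lemma F_odd a x : 1 < a -> F a (- x) = - F a x.
Proof.
  intros Ha.
  assert (Hd : forall y, is_derive (fun y => F a (- y) + F a y) y 0).
  { intros y.
    replace 0 with (scal (-1) (fa a (- y)) + fa a y).
    apply (is_derive_plus (fun y => F a (- y)) (F a)).
    apply (is_derive_comp (F a) (fun y => - y)). apply F_der; exact Ha.
    apply (is_derive_opp (fun y : R => y) y 1). apply is_derive_Reals, derivable_pt_lim_id.
    apply F_der; exact Ha.
    rewrite fa_even. unfold scal; simpl; unfold mult; simpl. ring. }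
  destruct (MVT_gen (fun y => F a (- y) + F a y) 0 x (fun _ => 0)) as [c [_ Hc]].
  - intros y _. apply Hd.
  - intros y _. apply continuity_pt_filterlim.
    apply (ex_derive_continuous (K:=R_AbsRing) (V:=R_NormedModule) (fun y => F a (- y) + F a y)).
    exists 0; apply Hd.
  - rewrite Ropp_0, F_0 in Hc. lra.
Qed.

Lemma tail a u b : 1 < a -> 0 < u -> u <= b ->
  F a b - F a u <= fa a u / Rpower u (a - 1).
Proof.
  intros Ha Hu Hub.
  set (R0 := Rpower u (a - 1)).
  assert (HR0 : 0 < R0) by apply Rpower_pos'.
  destruct (MVT_gen (fun y => F a y + fa a y / R0) u b
     (fun y => fa a y - Rpower y (a - 1) * fa a y / R0)) as [c [Hc Hc2]].
  - intros y Hy. rewrite Rmin_left in Hy by lra. rewrite Rmax_right in Hy by lra.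
    apply (is_derive_plus (F a) (fun y => fa a y / R0) y (fa a y) (- (Rpower y (a - 1) * fa a y / R0))).
    apply F_der; exact Ha.
    replace (- (Rpower y (a - 1) * fa a y / R0)) with ((- Rpower y (a - 1) * fa a y) * / R0) by (field; lra).
    apply (is_derive_scal_l (fa a) y _ (/ R0)). apply fa_der_pos; lra.
  - intros y Hy. rewrite Rmin_left in Hy by lra. rewrite Rmax_right in Hy by lra.
    apply continuity_pt_filterlim.
    apply (ex_derive_continuous (K:=R_AbsRing) (V:=R_NormedModule) (fun y => F a y + fa a y / R0)).
    exists (fa a y + (- Rpower y (a - 1) * fa a y) * / R0).
    apply (is_derive_plus (F a) (fun y => fa a y / R0)). apply F_der; exact Ha.
    apply (is_derive_scal_l (fa a) y (- Rpower y (a - 1) * fa a y) (/ R0)). apply fa_der_pos; lra.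
  - rewrite Rmin_left in Hc by lra. rewrite Rmax_right in Hc by lra.
    assert (Hle : fa a c - Rpower c (a - 1) * fa a c / R0 <= 0).
    { assert (R0 <= Rpower c (a - 1)).
      { apply Rle_Rpower_l; lra. }
      pose proof (fa_pos a c).
      apply Rle_minus. unfold Rdiv. rewrite Rmult_assoc, (Rmult_comm (fa a c)), <- Rmult_assoc.
      rewrite <- (Rmult_1_l (fa a c)) at 1. apply Rmult_le_compat_r. lra.
      apply (Rmult_le_reg_r R0). exact HR0. rewrite Rmult_1_l, Rmult_assoc, Rinv_l by lra. lra. }
    assert (Hp : (fa a c - Rpower c (a - 1) * fa a c / R0) * (b - u) <= 0).
    { apply Rmult_le_0_r; lra. }
    assert (0 <= fa a b / R0).
    { unfold Rdiv; apply Rmult_le_pos. left; apply fa_pos. left; apply Rinv_0_lt_compat; exact HR0. }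
    unfold Rdiv in *. lra.
Qed.

Lemma gen_r (f : R -> R) (c l : R) (I : R -> R) :
  (forall b, is_RInt f c b (I b)) -> is_lim I p_infty l ->
  is_RInt_gen f (at_point c) (Rbar_locally p_infty) l.
Proof.
  intros HI Hl P HP.
  unfold filtermapi.
  assert (HP' : Rbar_locally p_infty (fun b => P (I b))).
  { apply Hl. exact HP. }
  apply (Filter_prod _ _ _ (fun x => x = c) (fun b => P (I b))).
  - unfold at_point. reflexivity.
  - exact HP'.
  - intros x y Hx Hy. simpl. exists (I y). subst x. split; [apply HI|exact Hy].
Qed.

Lemma gen_l (f : R -> R) (c l : R) (I : R -> R) :
  (forall x, is_RInt f x c (I x)) -> is_lim I m_infty l ->
  is_RInt_gen f (Rbar_locally m_infty) (at_point c) l.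
Proof.
  intros HI Hl P HP.
  unfold filtermapi.
  assert (HP' : Rbar_locally m_infty (fun b => P (I b))).
  { apply Hl. exact HP. }
  apply (Filter_prod _ _ _ (fun b => P (I b)) (fun x => x = c)).
  - exact HP'.
  - unfold at_point. reflexivity.
  - intros x y Hx Hy. simpl. exists (I x). subst y. split; [apply HI|exact Hx].
Qed.

Lemma Rpower_1_base' y : Rpower 1 y = 1.
Proof. unfold Rpower; rewrite ln_1, Rmult_0_r, exp_0; reflexivity. Qed.

Lemma fa_le1 a x : 1 < a -> fa a x <= 1.
Proof.
  intros Ha. unfold fa. rewrite <- exp_0.
  pose proof (V_nonneg a x ltac:(lra)).
  destruct (Rle_lt_or_eq_dec _ _ H) as [h|h].
  left; apply exp_increasing; lra. rewrite <- h, Ropp_0; right; reflexivity.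
Qed.

Lemma F_bound a x : 1 < a -> F a x <= F a 1 + 1.
Proof.
  intros Ha. destruct (Rle_lt_dec x 1) as [h|h].
  - destruct (Rle_lt_or_eq_dec _ _ h) as [h'|h'].
    + pose proof (F_incr a x 1 Ha h'); lra.
    + subst; lra.
  - pose proof (tail a 1 x Ha Rlt_0_1 (Rlt_le _ _ h)).
    rewrite Rpower_1_base' in H. pose proof (fa_le1 a 1 Ha). unfold Rdiv in H.
    rewrite Rinv_1, Rmult_1_r in H. lra.
Qed.

Definition Fset a := fun y => exists x, y = F a x.

Lemma Fset_bound a : 1 < a -> bound (Fset a).
Proof. intros Ha. exists (F a 1 + 1). intros y [x ->]. apply F_bound, Ha. Qed.

Lemma Fset_ne a : exists y, Fset a y.
Proof. exists (F a 0). exists 0. reflexivity. Qed.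


Lemma F_le_A a A x : is_lub (Fset a) A -> F a x <= A.
Proof. intros [H1 _]. apply H1. exists x; reflexivity. Qed.

Lemma A_pos a A : 1 < a -> is_lub (Fset a) A -> 0 < A.
Proof.
  intros Ha HA. pose proof (F_le_A a A 1 HA). pose proof (F_incr a 0 1 Ha Rlt_0_1).
  rewrite F_0 in H0. lra.
Qed.

Lemma A_tail a A u : 1 < a -> is_lub (Fset a) A -> 0 < u ->
  A - F a u <= fa a u / Rpower u (a - 1).
Proof.
  intros Ha [_ H2] Hu.
  assert (A <= F a u + fa a u / Rpower u (a - 1)); [|lra].
  apply H2. intros y [x ->].
  destruct (Rle_lt_dec u x) as [h|h].
  - pose proof (tail a u x Ha Hu h); lra.
  - pose proof (F_incr a x u Ha h).
    assert (0 < fa a u / Rpower u (a - 1)).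
    { unfold Rdiv; apply Rmult_lt_0_compat. apply fa_pos. apply Rinv_0_lt_compat, Rpower_pos'. }
    lra.
Qed.

Lemma F_lim a A : 1 < a -> is_lub (Fset a) A -> is_lim (F a) p_infty A.
Proof.
  intros Ha HA. apply is_lim_spec. intros eps.
  assert (exists x, A - eps < F a x).
  { destruct HA as [H1 H2].
    destruct (Classical_Prop.classic (exists x, A - eps < F a x)) as [h|h]; auto.
    exfalso. assert (A <= A - eps); [|destruct eps; simpl in *; lra].
    apply H2. intros y [x ->]. destruct (Rle_lt_dec (F a x) (A - eps)) as [h'|h']; auto.
    exfalso; apply h; exists x; exact h'. }
  destruct H as [x0 Hx0]. exists x0. intros y Hy.
  pose proof (F_incr a x0 y Ha Hy). pose proof (F_le_A a A y HA).
  destruct eps; simpl in *. apply Rabs_def1; lra.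
Qed.

Lemma gen_right a A : 1 < a -> is_lub (Fset a) A ->
  is_RInt_gen (fa a) (at_point 0) (Rbar_locally p_infty) A.
Proof.
  intros Ha HA. apply (gen_r _ 0 A (F a)). intros; apply F_is, Ha. apply F_lim; assumption.
Qed.

Lemma gen_left a A : 1 < a -> is_lub (Fset a) A ->
  is_RInt_gen (fa a) (Rbar_locally m_infty) (at_point 0) A.
Proof.
  intros Ha HA. apply (gen_l _ 0 A (fun x => F a (- x))).
  - intros x. rewrite F_odd by exact Ha.
    apply (is_RInt_swap (V:=R_NormedModule)). apply F_is, Ha.
  - apply (is_lim_comp (F a) (fun x => - x) m_infty A p_infty).
    apply F_lim; assumption.
    apply is_lim_spec. intros M. exists (- M). intros y Hy. lra.
    exists 0. intros; discriminate.
Qed.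

Definition gg (y : R) : R := / 2 * exp (- Rabs y).

Lemma gg_cont x : continuous gg x.
Proof.
  unfold gg.
  apply (continuous_scal_r (K:=R_AbsRing) (V:=R_NormedModule) (/2) (fun y => exp (- Rabs y))).
  apply (continuous_comp (fun y => - Rabs y) exp).
  apply (continuous_opp (V:=R_NormedModule) Rabs). apply continuous_Rabs.
  apply (ex_derive_continuous (K:=R_AbsRing) (V:=R_NormedModule)). eexists; apply is_derive_exp.
Qed.

Lemma gg_pos x : 0 < gg x.
Proof. unfold gg. apply Rmult_lt_0_compat. lra. apply exp_pos. Qed.

Definition Fg (x : R) : R := RInt gg 0 x.

Lemma gg_ex_RInt u v : ex_RInt gg u v.
Proof. apply (ex_RInt_continuous (V:=R_CompleteNormedModule)). intros; apply gg_cont. Qed.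

Lemma Fg_is x : is_RInt gg 0 x (Fg x).
Proof. apply (RInt_correct (V:=R_CompleteNormedModule)), gg_ex_RInt. Qed.

Lemma Fg_pos_val x : 0 <= x -> Fg x = (1 - exp (- x)) / 2.
Proof.
  intros Hx.
  assert (H : is_RInt gg 0 x (minus (- exp (- x) / 2) (- exp (- 0) / 2))).
  { apply (is_RInt_derive (V:=R_CompleteNormedModule) (fun y => - exp (- y) / 2) gg).
    - intros y Hy. rewrite Rmin_left in Hy by lra. rewrite Rmax_right in Hy by lra.
      unfold gg. rewrite Rabs_pos_eq by lra.
      auto_derive. auto. field.
    - intros; apply gg_cont. }
  unfold Fg. rewrite (is_RInt_unique _ _ _ _ H).
  unfold minus, plus, opp; simpl. rewrite Ropp_0, exp_0. field.
Qed.

Lemma Fg_neg_val x : x <= 0 -> Fg x = (exp x - 1) / 2.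
Proof.
  intros Hx.
  assert (H : is_RInt gg 0 x (minus (exp x / 2) (exp 0 / 2))).
  { apply (is_RInt_derive (V:=R_CompleteNormedModule) (fun y => exp y / 2) gg).
    - intros y Hy. rewrite Rmin_right in Hy by lra. rewrite Rmax_left in Hy by lra.
      unfold gg. rewrite Rabs_left1 by lra. rewrite Ropp_involutive.
      auto_derive. auto. field.
    - intros; apply gg_cont. }
  unfold Fg. rewrite (is_RInt_unique _ _ _ _ H).
  unfold minus, plus, opp; simpl. rewrite exp_0. field.
Qed.

Lemma gen_G0 : is_RInt_gen gg (Rbar_locally m_infty) (at_point 0) (1 / 2).
Proof.
  apply (gen_l gg 0 (1/2) (fun x => - Fg x)).
  - intros x. apply (is_RInt_swap (V:=R_NormedModule)). apply Fg_is.
  - apply is_lim_spec. intros eps.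
    assert (He : 0 < 2 * eps) by (destruct eps; simpl; lra).
    pose proof (proj2 (is_lim_spec _ _ _) is_lim_exp_m (mkposreal _ He)) as [M HM].
    exists (Rmin M 0). intros y Hy.
    assert (y < M) by (pose proof (Rmin_l M 0); lra).
    assert (y <= 0) by (pose proof (Rmin_r M 0); lra).
    specialize (HM y H). simpl in HM.
    rewrite Fg_neg_val by exact H0.
    rewrite Rminus_0_r in HM. rewrite Rabs_pos_eq in HM by (left; apply exp_pos).
    pose proof (exp_pos y).
    replace (- ((exp y - 1) / 2) - 1 / 2) with (- (exp y / 2)) by field.
    rewrite Rabs_Ropp, Rabs_pos_eq by lra. destruct eps; simpl in *; lra.
Qed.

Lemma G_val x : G x = 1 / 2 + Fg x.
Proof.
  unfold G. apply (is_RInt_gen_unique (V:=R_CompleteNormedModule)).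
  apply (is_RInt_gen_Chasles (V:=R_NormedModule) gg 0 (1/2) (Fg x)).
  - exact gen_G0.
  - apply is_RInt_gen_at_point, Fg_is.
Qed.

Lemma G_der x : is_derive G x (gg x).
Proof.
  apply is_derive_ext with (f := fun x => 1 / 2 + Fg x).
  { intros; symmetry; apply G_val. }
  replace (gg x) with (0 + gg x) by ring.
  apply (is_derive_plus (fun _ => 1/2) Fg). apply (is_derive_const (K:=R_AbsRing) (V:=R_NormedModule)).
  apply (is_derive_RInt gg Fg 0 x).
  exists (mkposreal 1 Rlt_0_1). intros; apply Fg_is.
  apply gg_cont.
Qed.

Lemma gg_le_G s : gg s <= G s /\ gg s <= 1 - G s.
Proof.
  rewrite G_val. unfold gg. destruct (Rle_lt_dec 0 s) as [h|h].
  - rewrite Fg_pos_val by exact h. rewrite Rabs_pos_eq by exact h.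
    assert (exp (- s) <= 1). { rewrite <- exp_0. destruct h as [h|h].
      left; apply exp_increasing; lra. subst; rewrite Ropp_0; lra. }
    split; lra.
  - rewrite Fg_neg_val by lra. rewrite Rabs_left by exact h. rewrite Ropp_involutive.
    assert (exp s <= 1). { rewrite <- exp_0. left; apply exp_increasing; lra. }
    split; lra.
Qed.

Lemma G_incr x y : x < y -> G x < G y.
Proof.
  intros Hxy. apply (incr_function G m_infty p_infty gg); simpl; auto.
  intros; apply G_der. intros; apply gg_pos.
Qed.

Lemma is_RInt_gen_ext_all (f g : R -> R) Fa Fb {FFa : Filter Fa} {FFb : Filter Fb} (l : R) :
  (forall x, f x = g x) -> is_RInt_gen f Fa Fb l -> is_RInt_gen g Fa Fb l.
Proof.
  intros Hfg Hf. apply (is_RInt_gen_ext (V:=R_NormedModule) f g); auto.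
  apply (Filter_prod _ _ _ (fun _ => True) (fun _ => True)); try apply filter_true.
  intros; apply Hfg.
Qed.

Lemma fa_gen a A : 1 < a -> is_lub (Fset a) A -> forall x,
  is_RInt_gen (fa a) (Rbar_locally m_infty) (at_point x) (A + F a x).
Proof.
  intros Ha HA x.
  apply (is_RInt_gen_Chasles (V:=R_NormedModule) (fa a) 0 A (F a x)).
  - apply gen_left; assumption.
  - apply is_RInt_gen_at_point, F_is, Ha.
Qed.

Lemma Zc_val a A : 1 < a -> is_lub (Fset a) A -> Zc a = 2 * A.
Proof.
  intros Ha HA. unfold Zc. apply (is_RInt_gen_unique (V:=R_CompleteNormedModule)).
  replace (2 * A) with (plus A A) by (unfold plus; simpl; ring).
  apply (is_RInt_gen_Chasles (V:=R_NormedModule) (fa a) 0 A A).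
  - apply gen_left; assumption.
  - apply gen_right; assumption.
Qed.

Lemma H_val a A : 1 < a -> is_lub (Fset a) A -> forall x,
  H a x = (A + F a x) / (2 * A).
Proof.
  intros Ha HA x. unfold H. rewrite (Zc_val a A Ha HA).
  apply (is_RInt_gen_unique (V:=R_CompleteNormedModule)).
  pose proof (is_RInt_gen_scal (V:=R_NormedModule) (fa a) (/ (2 * A)) _ (fa_gen a A Ha HA x)) as Hs.
  replace ((A + F a x) / (2 * A)) with (scal (/ (2 * A)) (A + F a x))
    by (unfold scal; simpl; unfold mult; simpl; unfold Rdiv; ring).
  refine (is_RInt_gen_ext_all (fun y => scal (/ (2 * A)) (fa a y)) _ _ _ _ _ Hs).
  intros y. unfold scal; simpl; unfold mult; simpl. unfold fa, Rdiv. ring.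
Qed.

Lemma deriv_to_lim (f : R -> R) (x l : R) : is_derive f x l -> is_lim (fun h => (f (x + h) - f x) / h) 0 l.
Proof.
  intros Hd. apply is_derive_Reals in Hd. apply is_lim_spec. intros eps.
  destruct (Hd eps (cond_pos eps)) as [d Hdd].
  exists d. intros y Hy Hy0. apply Hdd. exact Hy0.
  unfold ball in Hy; simpl in Hy; unfold AbsRing_ball, abs, minus, plus, opp in Hy; simpl in Hy.
  rewrite Ropp_0, Rplus_0_r in Hy. exact Hy.
Qed.

Lemma lim_to_deriv (f : R -> R) (x l : R) : is_lim (fun h => (f (x + h) - f x) / h) 0 l -> is_derive f x l.
Proof.
  intros Hl. apply is_derive_Reals. intros eps Heps.
  apply is_lim_spec in Hl. unfold is_lim' in Hl. destruct (Hl (mkposreal eps Heps)) as [d Hd].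
  exists d. intros h Hh0 Hh. apply (Hd h). 
  unfold ball; simpl; unfold AbsRing_ball, abs, minus, plus, opp; simpl.
  rewrite Ropp_0, Rplus_0_r. exact Hh. exact Hh0.
Qed.

Lemma inv_deriv (P Q t : R -> R) s dP dQ :
  (forall x, Q x = P (t x)) ->
  (forall x y, x < y -> P x < P y) ->
  (forall x y, x < y -> Q x < Q y) ->
  is_derive P (t s) dP -> dP <> 0 ->
  is_derive Q s dQ ->
  is_lim t s (t s) ->
  is_derive t s (dQ / dP).
Proof.
  intros HQP HP HQ HdP HdP0 HdQ Ht.
  assert (Pinj : forall x y, P x = P y -> x = y).
  { intros x y E. destruct (Rtotal_order x y) as [h|[h|h]]; auto.
    apply HP in h; lra. apply HP in h; lra. }
  assert (Qinj : forall x y, Q x = Q y -> x = y).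
  { intros x y E. destruct (Rtotal_order x y) as [h|[h|h]]; auto.
    apply HQ in h; lra. apply HQ in h; lra. }
  set (u := t s).
  set (k := fun h => t (s + h) - u).
  set (r := fun k => (P (u + k) - P u) / k).
  set (q := fun h => (Q (s + h) - Q s) / h).
  assert (Hq : is_lim q 0 dQ) by (apply deriv_to_lim; exact HdQ).
  assert (Hr : is_lim r 0 dP) by (apply deriv_to_lim; exact HdP).
  assert (Hk0 : forall h, h <> 0 -> k h <> 0).
  { intros h Hh E. unfold k in E. apply Hh.
    assert (E2 : t (s + h) = t s) by (unfold u in E; lra).
    assert (Q (s + h) = Q s) by (rewrite !HQP, E2; reflexivity).
    apply Qinj in H. lra. }
  assert (Hk : is_lim k 0 0).
  { apply is_lim_spec. apply is_lim_spec in Ht. intros eps.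
    unfold is_lim' in Ht. destruct (Ht eps) as [d Hd]. exists d. intros y Hy Hy0.
    unfold k, u. rewrite Rminus_0_r.
    destruct (Req_dec y 0) as [e|n]; [contradiction|].
    apply Hd.
    unfold ball in *; simpl in *; unfold AbsRing_ball, abs, minus, plus, opp in *; simpl in *.
    replace (s + y + - s) with (y + - 0) by ring. exact Hy.
    intros E. apply n. lra. }
  assert (Hrk : is_lim (fun h => r (k h)) 0 dP).
  { apply (is_lim_comp r k 0 dP 0). exact Hr. exact Hk.
    exists (mkposreal 1 Rlt_0_1). intros y _ Hy. intros E; apply (Hk0 y Hy). injection E; auto. }
  assert (Hdiv : is_lim (fun h => q h / r (k h)) 0 (dQ / dP)).
  { apply (is_lim_div q (fun h => r (k h)) 0 dQ dP Hq Hrk).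
    intros E; apply HdP0; injection E; auto.
    simpl. exact I. }
  apply lim_to_deriv.
  apply (is_lim_ext_loc (fun h => q h / r (k h))); [|exact Hdiv].
  exists (mkposreal 1 Rlt_0_1). intros h _ Hh.
  unfold q, r, k.
  replace (u + (t (s + h) - u)) with (t (s + h)) by ring.
  rewrite <- HQP. unfold u; rewrite <- HQP.
  assert (Hkh := Hk0 h Hh). unfold k, u in Hkh.
  assert (Q (s + h) - Q s <> 0).
  { intros E. apply Hh. assert (Q (s + h) = Q s) by lra. apply Qinj in H. lra. }
  field. repeat split; auto.
Qed.

Lemma cont_t (P Q t : R -> R) s :
  (forall x, Q x = P (t x)) ->
  (forall x y, x < y -> P x < P y) ->
  continuity_pt Q s ->
  is_lim t s (t s).
Proof.
  intros HQP HP HQ. apply is_lim_spec. intros eps.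
  set (u := t s).
  assert (H1 : P (u - eps) < Q s) by (unfold u; rewrite HQP; apply HP; destruct eps; simpl; lra).
  assert (H2 : Q s < P (u + eps)) by (unfold u; rewrite HQP; apply HP; destruct eps; simpl; lra).
  set (m := Rmin (P (u + eps) - Q s) (Q s - P (u - eps))).
  assert (Hm : 0 < m) by (unfold m; apply Rmin_glb_lt; lra).
  pose proof (proj1 (continuity_pt_locally Q s) HQ (mkposreal m Hm)) as [d Hd].
  exists d. intros y Hy _. specialize (Hd y Hy). simpl in Hd.
  pose proof (Rmin_l (P (u + eps) - Q s) (Q s - P (u - eps))).
  pose proof (Rmin_r (P (u + eps) - Q s) (Q s - P (u - eps))).
  fold m in H, H0.
  apply Rabs_def2 in Hd. destruct Hd as [Hd1 Hd2].
  rewrite HQP in Hd1, Hd2.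
  apply Rabs_def1.
  - destruct (Rlt_le_dec (t y) (u + eps)) as [h|h]. lra.
    exfalso. destruct (Rle_lt_or_eq_dec _ _ h) as [h'|h'].
    apply HP in h'. lra. rewrite <- h' in Hd1. lra.
  - destruct (Rlt_le_dec (u - eps) (t y)) as [h|h]. lra.
    exfalso. destruct (Rle_lt_or_eq_dec _ _ h) as [h'|h'].
    apply HP in h'. lra. rewrite h' in Hd2. lra.
Qed.

Lemma div_le_aux X f D C : 0 < f -> 0 < D + 1 -> X * (D + 1) <= C * f -> X / f <= C / (D + 1).
Proof.
  intros Hf HD HX.
  replace (X / f) with ((X * (D + 1)) * / (f * (D + 1))) by (field; lra).
  replace (C / (D + 1)) with ((C * f) * / (f * (D + 1))) by (field; lra).
  apply Rmult_le_compat_r. left; apply Rinv_0_lt_compat, Rmult_lt_0_compat; lra. exact HX.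
Qed.

Lemma tail_final a A y : 1 < a -> is_lub (Fset a) A -> 0 <= y ->
  (A - F a y) * (abspow (a - 1) y + 1) <= (2 + 2 * exp 1 * A) * fa a y.
Proof.
  intros Ha HA Hy.
  pose proof (A_pos a A Ha HA) as HA0.
  pose proof (fa_pos a y) as Hf.
  destruct (Rle_lt_dec 1 y) as [h|h].
  - unfold abspow. destruct (Req_EM_T y 0) as [e|_]; [lra|].
    rewrite Rabs_pos_eq by lra.
    set (R0 := Rpower y (a - 1)).
    assert (HR : 1 <= R0).
    { unfold R0. assert (Hr : Rpower 1 (a - 1) <= Rpower y (a - 1)) by (apply Rle_Rpower_l; lra). rewrite Rpower_1_base' in Hr. exact Hr. }
    pose proof (A_tail a A y Ha HA ltac:(lra)) as Ht. fold R0 in Ht.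
    assert (HAF : 0 <= A - F a y) by (pose proof (F_le_A a A y HA); lra).
    apply Rle_trans with (fa a y / R0 * (R0 + 1)).
    apply Rmult_le_compat_r; lra.
    replace (fa a y / R0 * (R0 + 1)) with (fa a y * (1 + / R0)) by (field; lra).
    assert (/ R0 <= 1).
    { rewrite <- Rinv_1. apply Rinv_le_contravar; lra. }
    assert (0 <= 2 * exp 1 * A * fa a y).
    { apply Rmult_le_pos; [|lra]. apply Rmult_le_pos; [|lra]. pose proof (exp_pos 1); lra. }
    nra.
  - assert (HD : abspow (a - 1) y <= 1) by (apply abspow_le1; [lra|rewrite Rabs_pos_eq; lra]).
    assert (HD0 : 0 <= abspow (a - 1) y).
    { unfold abspow. destruct (Req_EM_T y 0). lra. left; apply Rpower_pos'. }
    assert (HF : 0 <= F a y).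
    { rewrite <- (F_0 a). destruct (Rle_lt_or_eq_dec _ _ Hy) as [h'|h'].
      left; apply F_incr; auto. subst; lra. }
    assert (Hfe : exp (-1) <= fa a y) by (apply fa_ge; [lra|rewrite Rabs_pos_eq; lra]).
    assert (Hee : exp 1 * exp (-1) = 1) by (rewrite <- exp_plus; replace (1 + -1) with 0 by ring; apply exp_0).
    assert (A <= exp 1 * A * fa a y).
    { apply Rle_trans with (exp 1 * A * exp (-1)).
      right. replace (exp 1 * A * exp (-1)) with (A * (exp 1 * exp (-1))) by ring. rewrite Hee; ring.
      apply Rmult_le_compat_l. pose proof (exp_pos 1); nra. exact Hfe. }
    assert ((A - F a y) * (abspow (a - 1) y + 1) <= A * 2).
    { pose proof (F_le_A a A y HA). apply Rmult_le_compat; lra. }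
    nra.
Qed.

Theorem lemma3p5 (alpha : R) (halpha : 1 < alpha) :
  exists C : R, 0 < C /\
    forall t : R -> R,
      (forall x, G x = H alpha (t x)) ->
      forall s : R,
        ex_derive t s /\
        Rabs (Derive t s) <= C / (Derive (V alpha) (Rabs (t s)) + 1).
Proof.
  destruct (completeness (Fset alpha) (Fset_bound alpha halpha) (Fset_ne alpha)) as [A HA].
  pose proof (A_pos alpha A halpha HA) as HA0.
  exists (2 + 2 * exp 1 * A). split.
  { pose proof (exp_pos 1). nra. }
  intros t Ht s.
  set (P := fun y => (A + F alpha y) / (2 * A)).
  assert (HQP : forall x, G x = P (t x)).
  { intros x. rewrite Ht. unfold P. apply H_val; assumption. }
  assert (HP : forall x y, x < y -> P x < P y).
  { intros x y Hxy. unfold P. apply Rmult_lt_compat_r.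
    apply Rinv_0_lt_compat; lra. pose proof (F_incr alpha x y halpha Hxy); lra. }
  assert (HdP : is_derive P (t s) (fa alpha (t s) / (2 * A))).
  { unfold P. 
    replace (fa alpha (t s) / (2 * A)) with (/ (2 * A) * (0 + fa alpha (t s))) by (field; lra).
    apply is_derive_ext with (f := fun y => / (2 * A) * (A + F alpha y)).
    { intros z. simpl. unfold Rdiv. ring. }
    apply is_derive_scal.
    apply (is_derive_plus (fun _ => A) (F alpha)).
    apply (is_derive_const (K:=R_AbsRing) (V:=R_NormedModule)).
    apply F_der, halpha. }
  assert (Hd : is_derive t s (gg s / (fa alpha (t s) / (2 * A)))).
  { apply (inv_deriv P G t s); auto.
    - apply G_incr.
    - pose proof (fa_pos alpha (t s)). intros E. unfold Rdiv in E.
      apply Rmult_integral in E. destruct E as [E|E]. lra.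
      pose proof (Rinv_neq_0_compat (2 * A) ltac:(lra)). contradiction.
    - apply G_der.
    - apply (cont_t P G t s HQP HP).
      apply continuity_pt_filterlim.
      apply (ex_derive_continuous (K:=R_AbsRing) (V:=R_NormedModule)). exists (gg s); apply G_der. }
  split. { eexists; exact Hd. }
  rewrite (is_derive_unique _ _ _ Hd).
  rewrite (is_derive_unique _ _ _ (V_der_nonneg alpha (Rabs (t s)) halpha (Rabs_pos _))).
  set (u := t s). set (y := Rabs u).
  assert (Hfy : fa alpha u = fa alpha y).
  { unfold y. destruct (Rle_lt_dec 0 u). rewrite Rabs_pos_eq; auto.
    rewrite Rabs_left by auto. rewrite fa_even; reflexivity. }
  assert (Hg : 2 * A * gg s <= A - F alpha y).
  { destruct (gg_le_G s) as [g1 g2]. rewrite (HQP s) in g1, g2. fold u in g1, g2.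
    unfold P in g1, g2. unfold y.
    destruct (Rle_lt_dec 0 u) as [h|h].
    - rewrite Rabs_pos_eq by exact h.
      assert (E : 1 - (A + F alpha u) / (2 * A) = (A - F alpha u) / (2 * A)) by (field; lra).
      rewrite E in g2.
      apply (Rmult_le_compat_l (2 * A)) in g2; [|lra].
      replace (2 * A * ((A - F alpha u) / (2 * A))) with (A - F alpha u) in g2 by (field; lra).
      exact g2.
    - rewrite Rabs_left by exact h. rewrite F_odd by exact halpha.
      apply (Rmult_le_compat_l (2 * A)) in g1; [|lra].
      replace (2 * A * ((A + F alpha u) / (2 * A))) with (A + F alpha u) in g1 by (field; lra).
      lra. }
  assert (HD0 : 0 <= abspow (alpha - 1) y).
  { unfold abspow. destruct (Req_EM_T y 0). lra. left; apply Rpower_pos'. }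
  pose proof (fa_pos alpha y) as Hf. pose proof (gg_pos s) as Hgp.
  rewrite Hfy.
  rewrite Rabs_pos_eq.
  2: { left. apply Rmult_lt_0_compat. exact Hgp. apply Rinv_0_lt_compat.
       apply Rmult_lt_0_compat. exact Hf. apply Rinv_0_lt_compat; lra. }
  replace (gg s / (fa alpha y / (2 * A))) with ((2 * A * gg s) / fa alpha y) by (field; lra).
  apply div_le_aux; [exact Hf|lra|].
  apply Rle_trans with ((A - F alpha y) * (abspow (alpha - 1) y + 1)).
  apply Rmult_le_compat_r; lra.
  apply tail_final; auto. apply Rabs_pos.
Qed.
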